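(* Let $n$ be a positive integer and let $A(n)=(a_{ij})$, $p=p(n)$, $pp=pp(n)$, $b(n)$ be as in the context. Let $m\ge 1$ be an integer such that $\overline{p}=pm$ satisfies $\lfloor \overline{p}/2\rfloor> b(n)$, put $r=\lfloor\overline{p}/2\rfloor$, let $v$ be an integer with $v\ge pp+\overline{p}$, and let $B=(b_{ij})_{1\le i,j\le\overline{p}}$ be the $\overline{p}\times\overline{p}$ matrix with $b_{ij}=a_{v+i,v+j}$ if $i-r\le j\le i+r$; $b_{ij}=a_{v+i,v+j-\overline{p}}$ if $j>i+r$; $b_{ij}=a_{v+i,v+j+\overline{p}}$ if $j<i-r$. Then every column of $B$ contains exactly $n+1$ ones.
   Context: $\mathbb{N}=\{1,2,3,\dots\}$. Fix a positive integer $n$. The infinite $\{0,1\}$-matrix $A(n)=(a_{ij})_{i,j\in\mathbb{N}}$ is defined recursively. Its entries are determined row by row (row $1$ first), and within each row from left to right, so that $a_{kl}$ is determined after all $a_{ij}$ with $i<k$ and all $a_{kj}$ with $j<l$. One sets $a_{kl}=1$ if and only if all of the following hold: (1) $\sum_{j<l}a_{kj}<n+1$; (2) $\sum_{i<k}a_{il}<n+1$; (3) there is no pair $(i,j)$ with $1\le i<k$, $1\le j<l$ and $a_{ij}=a_{il}=a_{kj}=1$. Otherwise $a_{kl}=0$. The matrix $A(n)$ is eventually periodic along the diagonal: there exist $c\ge0$, $q\ge1$ with $a_{i+q,j+q}=a_{ij}$ for all $i>c$, $j\ge1$. The period $p=p(n)$ is the smallest $q\ge1$ for which such a $c$ exists,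 and the preperiod $pp=pp(n)$ is the smallest $c\ge 0$ with $a_{i+p,j+p}=a_{ij}$ for all $i>c$, $j\ge 1$. Define $b(n)=\max\{|j-i| : i,j\ge1,\ a_{ij}=1,\ i>pp(n)\}$. *)

(* Defs.v *)
From mathcomp Require Import all_boot.
Set Implicit Arguments. Unset Strict Implicit. Unset Printing Implicit Defensive.

(* Internally rows/columns
   are stored 0-based in lists; the exported function [aA n i j] uses the
   paper's 1-based indices (i, j >= 1), and is [false] when i = 0 or j = 0. *)

(* Given the previously computed rows [prev] (rows 1..k-1, each a list of
   columns 1..L) and the current partial row [cur] (columns 1..l-1), decide
   a_{k l} (with l = size cur + 1). *)
Definition next_entry (n : nat) (prev : seq (seq bool)) (cur : seq bool) : bool :=
  let l0 := size cur in (* 0-based index of column l *)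
  [&& count id cur < n.+1,
      count (fun row => nth false row l0) prev < n.+1 &
      ~~ has (fun row => nth false row l0 &&
                 has (fun j => nth false row j && nth false cur j) (iota 0 l0)) prev].

Fixpoint build_row (n : nat) (prev : seq (seq bool)) (cur : seq bool) (fuel : nat)
  : seq bool :=
  match fuel with
  | 0 => cur
  | f.+1 => build_row n prev (rcons cur (next_entry n prev cur)) f
  end.

Fixpoint block (n K L : nat) : seq (seq bool) :=
  match K with
  | 0 => [::]
  | K'.+1 => let prev := block n K' L in rcons prev (build_row n prev [::] L)
  end.

Definition aA (n i j : nat) : bool :=
  if (i == 0) || (j == 0) then false
  else nth false (nth [::] (block n i j) i.-1) j.-1.

Definition periodic_from (n q c : nat) : Prop :=
  forall i j, c < i -> 1 <= j -> aA n (i + q) (j + q) = aA n i j.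

Definition is_period (n p : nat) : Prop :=
  [/\ 1 <= p, (exists c, periodic_from n p c) &
      forall q, 1 <= q -> (exists c, periodic_from n q c) -> p <= q].

Definition is_preperiod (n p pp : nat) : Prop :=
  periodic_from n p pp /\ forall c, periodic_from n p c -> pp <= c.

Definition distn (i j : nat) : nat := maxn (i - j) (j - i).

Definition is_bn (n pp b : nat) : Prop :=
  (exists i j, [/\ 1 <= i, 1 <= j, pp < i, aA n i j & distn i j = b]) /\
  (forall i j, 1 <= i -> 1 <= j -> pp < i -> aA n i j -> distn i j <= b).

Definition matB (n v pb i j : nat) : bool :=
  let r := pb./2 in
  if i + r < j then aA n (v + i) (v + j - pb)
  else if j + r < i then aA n (v + i) (v + j + pb)
  else aA n (v + i) (v + j).

(* Main.v *)
Require Import Defs.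
From mathcomp Require Import all_boot zify.
From Stdlib Require Import Classical_Prop.
Set Implicit Arguments. Unset Strict Implicit.

Definition sem (n : nat) (g : nat -> nat -> bool) (k l : nat) : bool :=
  [&& count (fun j => g k j) (iota 0 l) < n.+1,
      count (fun i => g i l) (iota 0 k) < n.+1 &
      ~~ has (fun i => g i l && has (fun j => g i j && g k j) (iota 0 l)) (iota 0 k)].

Lemma build_row_size n prev cur f : size (build_row n prev cur f) = size cur + f.
Proof. elim: f cur => [|f IH] cur /=; first by rewrite addn0. by rewrite IH size_rcons addSnnS. Qed.

Lemma build_row_cat n prev cur f : exists s, build_row n prev cur f = cur ++ s.
Proof.
elim: f cur => [|f IH] cur /=; first by exists [::]; rewrite cats0.
have [s ->] := IH (rcons cur (next_entry n prev cur)).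
by exists (next_entry n prev cur :: s); rewrite cat_rcons.
Qed.

Lemma build_row_nth n prev f cur i : size cur <= i < size cur + f ->
  nth false (build_row n prev cur f) i = next_entry n prev (take i (build_row n prev cur f)).
Proof.
elim: f cur => [|f IH] cur /=; first by rewrite addn0; lia.
move=> Hi.
case: (ltngtP i (size cur)) => Hc; first by lia.
  apply: IH; rewrite size_rcons; lia.
have [s ->] := build_row_cat n prev (rcons cur (next_entry n prev cur)) f.
rewrite -cats1 -catA Hc nth_cat ltnn subnn /= take_cat ltnn subnn take0 cats0 //.
Qed.

Lemma block_size n K L : size (block n K L) = K.
Proof. by elim: K => //= K IH; rewrite size_rcons IH. Qed.

Lemma block_row n K L k : k < K -> nth [::] (block n K L) k = build_row n (block n k L) [::] L.
Proof.
elim: K => // K IH Hk /=; rewrite nth_rcons block_size.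
case: (ltngtP k K) => H; [by apply: IH | lia | by rewrite H].
Qed.

Lemma count_nth (T : Type) (x0 : T) (a : pred T) s :
  count a s = count (fun i => a (nth x0 s i)) (iota 0 (size s)).
Proof. by rewrite -{1}(mkseq_nth x0 s) /mkseq count_map. Qed.

Lemma has_nth (T : Type) (x0 : T) (a : pred T) s :
  has a s = has (fun i => a (nth x0 s i)) (iota 0 (size s)).
Proof. by rewrite -{1}(mkseq_nth x0 s) /mkseq has_map. Qed.

Lemma next_entry_sem n prev cur g :
  (forall i j, i < size prev -> j <= size cur -> nth false (nth [::] prev i) j = g i j) ->
  (forall j, j < size cur -> nth false cur j = g (size prev) j) ->
  next_entry n prev cur = sem n g (size prev) (size cur).
Proof.
move=> Hp Hc; rewrite /next_entry /sem.
rewrite (count_nth false) (count_nth [::]) (has_nth [::]).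
congr [&& _ < _, _ < _ & ~~ _].
- apply: eq_in_count => j; rewrite mem_iota => /andP[_ Hj]; exact: Hc.
- apply: eq_in_count => i; rewrite mem_iota => /andP[_ Hi]; exact: Hp.
- apply: eq_in_has => i; rewrite mem_iota => /andP[_ Hi]; rewrite Hp //.
  congr (_ && _); apply: eq_in_has => j; rewrite mem_iota => /andP[_ Hj].
  rewrite Hp ?Hc //; lia.
Qed.

Definition entry n K L k l := nth false (nth [::] (block n K L) k) l.
Definition E n k l := aA n k.+1 l.+1.

Lemma E_entry n k l : E n k l = entry n k.+1 l.+1 k l.
Proof. by []. Qed.

Lemma entry_step n k l K L :
  (forall k' l' K' L', k' + l' < k + l -> k' < K' -> l' < L' -> entry n K' L' k' l' = sem n (E n) k' l') ->
  k < K -> l < L -> entry n K L k l = sem n (E n) k l.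
Proof.
move=> IH HK HL.
rewrite /entry block_row //.
set row := build_row _ _ _ _.
have Hrs : size row = L by rewrite build_row_size.
rewrite build_row_nth /=; last lia.
rewrite -/row.
have Hsz : size (take l row) = l by rewrite size_take Hrs HL.
rewrite -{2}Hsz -{2}(block_size n k L) ; apply: next_entry_sem.
all: rewrite ?block_size ?Hsz.
- move=> i j Hi Hj; rewrite E_entry -/(entry n k L i j) !IH //; lia.
- move=> j Hj; rewrite nth_take // E_entry.
  have -> : nth false row j = entry n K L k j by rewrite /entry block_row.
  rewrite !IH //; lia.
Qed.

Lemma entry_sem n : forall s k l K L, k + l <= s -> k < K -> l < L ->
  entry n K L k l = sem n (E n) k l.
Proof.
elim=> [|s IH] k l K L Hs HK HL; apply: entry_step => // k' l' K' L' H; first lia.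
apply: IH; lia.
Qed.

Lemma E_rec n k l : E n k l = sem n (E n) k l.
Proof. rewrite E_entry; apply: (@entry_sem n (k + l)) => //. Qed.

Lemma count_shift (f : pred nat) m d N :
  count f (iota (m + d) N) = count (fun t => f (t + d)) (iota m N).
Proof. by rewrite addnC iotaDl count_map; apply: eq_count => x /=; rewrite addnC. Qed.

Lemma col_bound n l K : count (fun i => E n i l) (iota 0 K) <= n.+1.
Proof.
elim: K => // K IH; rewrite -addn1 iotaD count_cat /= add0n.
case H: (E n K l) => /=; last lia.
move: H; rewrite E_rec /sem => /and3P[_ H _]; lia.
Qed.

Lemma row_bound n k L : count (fun j => E n k j) (iota 0 L) <= n.+1.
Proof.
elim: L => // L IH; rewrite -addn1 iotaD count_cat /= add0n.
case H: (E n k L) => /=; last lia.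
move: H; rewrite E_rec /sem => /and3P[H _ _]; lia.
Qed.

Lemma eventually_false N (f : nat -> bool) :
  (forall K, count f (iota 0 K) <= N) -> exists B, forall k, B <= k -> f k = false.
Proof.
elim: N f => [|N IH] f Hf.
  exists 0 => k _; move: (Hf k.+1); rewrite -addn1 iotaD count_cat /=.
  by case: (f k) => //=; lia.
case: (classic (exists k, f k)) => [[k0 Hk0]|Hno]; last first.
  by exists 0 => k _; apply/negbTE/negP => H; apply: Hno; exists k.
have Hg : forall K, count (fun k => f (k + k0.+1)) (iota 0 K) <= N.
  move=> K; move: (Hf (k0.+1 + K)); rewrite iotaD count_cat add0n -(count_shift f 0).
  rewrite -addn1 iotaD count_cat /= Hk0 add0n; lia.
have [B HB] := IH _ Hg.
exists (B + k0.+1) => k Hk; have := HB (k - k0.+1); rewrite subnK; last lia.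
apply; lia.
Qed.

Lemma combine (F : nat -> nat -> bool) l :
  (forall x, exists B, forall k, B <= k -> F x k = false) ->
  exists B, forall x k, x < l -> B <= k -> F x k = false.
Proof.
elim: l => [|l IH] H; first by exists 0.
have [B1 H1] := IH H; have [B2 H2] := H l.
exists (maxn B1 B2) => x k Hx Hk.
case: (ltngtP x l) => Hxl; [apply: H1; lia | lia | rewrite Hxl; apply: H2; lia].
Qed.

Lemma col_full n l : exists K, count (fun i => E n i l) (iota 0 K) = n.+1.
Proof.
have [R HR] := @combine (fun j k => E n k j) l
  (fun j => eventually_false (fun K => col_bound n j K)).
have Hstep : forall t, t <= n.+1 -> t <= count (fun i => E n i l) (iota 0 (R + t)).
  elim=> // t IHt Ht; rewrite addnS -[(R + t).+1]addn1 iotaD count_cat /= add0n.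
  case: (ltnP t (count (fun i => E n i l) (iota 0 (R + t)))) => Hc; first lia.
  have : E n (R + t) l.
    rewrite E_rec /sem; apply/and3P; split.
    - rewrite (eq_in_count (a2 := pred0)) ?count_pred0 // => j.
      rewrite mem_iota => /andP[_ Hj] /=; apply: HR; lia.
    - have := IHt (ltnW Ht); lia.
    - apply/hasPn => i _; apply/negP => /andP[_ /hasP [j]].
      rewrite mem_iota => /andP[_ Hj].
      have Hz : E n (R + t) j = false by apply: HR; lia.
      by rewrite Hz andbF.
  move=> ->; have := IHt (ltnW Ht); lia.
exists (R + n.+1); apply/eqP; rewrite eqn_leq col_bound Hstep //.
Qed.

Lemma aA0 n c : aA n 0 c = false. Proof. by rewrite /aA. Qed.
Lemma aA0r n t : aA n t 0 = false. Proof. by rewrite /aA orbT. Qed.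

Lemma count_col1 n c K :
  count (fun t => aA n t c.+1) (iota 0 K.+1) = count (fun t => E n t c) (iota 0 K).
Proof.
rewrite [iota 0 _]/=.
rewrite /= add0n (count_shift _ 0 1); apply: eq_count => x /=; by rewrite addn1.
Qed.

Lemma col_bound1 n c K : count (fun t => aA n t c) (iota 0 K) <= n.+1.
Proof.
case: c => [|c].
  by rewrite (eq_in_count (a2 := pred0)) ?count_pred0 // => t _; exact: aA0r.
case: K => // K; rewrite count_col1; exact: col_bound.
Qed.

Lemma col_full1 n c : 1 <= c ->
  exists K0, forall K, K0 <= K -> count (fun t => aA n t c) (iota 0 K) = n.+1.
Proof.
case: c => // c _; have [K HK] := col_full n c.
exists K.+1 => K' HK'; apply/eqP; rewrite eqn_leq col_bound1 /=.
rewrite -(subnKC HK') iotaD count_cat count_col1 HK; exact: leq_addr.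
Qed.

Lemma row_zero1 n R : exists B, forall t c, t <= R -> B <= c -> aA n t c = false.
Proof.
have H : forall t, exists B, forall c, B <= c -> aA n t c = false.
  case=> [|t]; first by exists 0 => k _; exact: aA0.
  have [B HB] := eventually_false (fun K => row_bound n t K).
  exists B.+1 => [[|c]] Hc //; exact: HB.
have [B HB] := @combine (aA n) R.+1 H.
by exists B => t c Ht Hc; apply: HB.
Qed.

Lemma per_iter n p pp : periodic_from n p pp ->
  forall k t c, pp < t -> 1 <= c -> aA n (t + p * k) (c + p * k) = aA n t c.
Proof.
move=> Hp; elim=> [|k IH] t c Ht Hc; first by rewrite muln0 !addn0.
rewrite mulnS (addnC p) !addnA Hp ?IH //; lia.
Qed.

Lemma col_low n p pp b m : periodic_from n p pp ->
  (forall i j, 1 <= i -> 1 <= j -> pp < i -> aA n i j -> distn i j <= b) ->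
  1 <= p * m ->
  forall c, pp + b < c -> forall t, t <= pp -> aA n t c = false.
Proof.
move=> Hper Hb HP c Hc.
have [B HB] := row_zero1 n pp.
set Q := p * (m * B).
have HQB : B <= Q by rewrite /Q mulnA; exact: leq_pmull.
have [K0 HK0] := @col_full1 n (c + Q) (ltac:(lia)).
have Hfull := HK0 (pp.+1 + Q + K0) (ltac:(lia)).
rewrite iotaD count_cat in Hfull.
have H0 : count (fun t => aA n t (c + Q)) (iota 0 (pp.+1 + Q)) = 0.
  apply/eqP; rewrite -leqn0 leqNgt -has_count; apply/hasPn => t.
  rewrite mem_iota => /andP[_ Ht].
  case: (leqP t pp) => Htp; first by rewrite HB //; lia.
  apply/negP => Ha; have := Hb t (c + Q) (ltac:(lia)) (ltac:(lia)) Htp Ha.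
  rewrite /distn; lia.
rewrite H0 add0n add0n (count_shift _ pp.+1 Q) in Hfull.
have Hc1 : count (fun t => aA n t c) (iota pp.+1 K0) = n.+1.
  rewrite -Hfull; apply: eq_in_count => t; rewrite mem_iota => /andP[Ht _] /=.
  by rewrite (per_iter Hper) //; lia.
have Hbd := col_bound1 n c (pp.+1 + K0).
rewrite iotaD count_cat add0n Hc1 in Hbd.
have Hz : count (fun t => aA n t c) (iota 0 pp.+1) = 0 by lia.
move=> t Ht; apply/negbTE/negP => Ha.
move/eqP: Hz; rewrite -leqn0 leqNgt -has_count => /hasPn /(_ t).
rewrite mem_iota Ha => H; by have := H ltac:(lia).
Qed.

Lemma count_sum3 (f g h k : pred nat) s :
  (forall x, x \in s -> (f x : nat) = g x + h x + k x) ->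
  count f s = count g s + count h s + count k s.
Proof.
elim: s => //= x s IH H.
rewrite H ?mem_head // IH; first lia.
by move=> y Hy; apply: H; rewrite in_cons Hy orbT.
Qed.

Theorem theorem4p3 (n p pp b m v : nat) :
  0 < n ->
  is_period n p ->
  is_preperiod n p pp ->
  is_bn n pp b ->
  1 <= m ->
  b < (p * m)./2 ->
  pp + p * m <= v ->
  forall j, 1 <= j <= p * m ->
    count (fun i => matB n v (p * m) i j) (iota 1 (p * m)) = n.+1.
Proof.
move=> _ [Hp1 _ _] [Hper _] [_ Hb] Hm Hbr Hv j /andP[Hj1 HjP].
have HP1 : 1 <= p * m by rewrite muln_gt0 Hp1.
have Hlow := col_low Hper Hb HP1.
set P := p * m in Hbr Hv HjP Hlow HP1 *.
set r := P./2 in Hbr *.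
have Hr : r + r <= P <= r + r + 1.
  have := odd_double_half P; rewrite -/r -addnn; case: (odd P) => /=; lia.
have Hone : forall t, aA n t (v + j) -> pp < t /\ distn t (v + j) <= b.
  move=> t Ht; case: (leqP t pp) => Htp; first by rewrite Hlow in Ht; lia.
  split=> //; apply: Hb => //; lia.
have Hzero : forall t, b < distn t (v + j) -> aA n t (v + j) = false.
  by move=> t Hd; apply/negbTE/negP => /Hone [_]; lia.
have HperP : forall t c', pp < t -> 1 <= c' -> aA n (t + P) (c' + P) = aA n t c'.
  by move=> t c' Ht Hc'; exact: (per_iter Hper).
have Hpt : forall i, i \in iota 1 P -> (matB n v P i j : nat) =
    aA n (v + i) (v + j) + aA n (v + i + P) (v + j) + aA n (v + i - P) (v + j).
  move=> i; rewrite mem_iota => /andP[Hi1 HiP]; rewrite /matB -/r.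
  case: ifP => H1.
    rewrite (Hzero (v + i)); last by rewrite /distn; lia.
    rewrite (Hzero (v + i - P)); last by rewrite /distn; lia.
    rewrite -(HperP (v + i) (v + j - P)); [|lia|lia].
    have -> : v + j - P + P = v + j by lia.
    by rewrite /= addn0.
  move/negbT: H1; rewrite -leqNgt => H1.
  case: ifP => H2.
    rewrite (Hzero (v + i)); last by rewrite /distn; lia.
    rewrite (Hzero (v + i + P)); last by rewrite /distn; lia.
    rewrite -(HperP (v + i - P) (v + j)); [|lia|lia].
    by have -> : v + i - P + P = v + i by lia.
  move/negbT: H2; rewrite -leqNgt => H2.
  rewrite (Hzero (v + i + P)); last by rewrite /distn; lia.
  rewrite (Hzero (v + i - P)); last by rewrite /distn; lia.
  by rewrite /= !addn0.
rewrite (count_sum3 Hpt).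
have Ezero : forall s, (forall t, t \in s -> b < distn t (v + j)) ->
    count (fun t => aA n t (v + j)) s = 0.
  move=> s Hs; apply/eqP; rewrite -leqn0 leqNgt -has_count; apply/hasPn => t Ht.
  by rewrite Hzero // Hs.
have C1 : count (fun i => aA n (v + i) (v + j)) (iota 1 P) =
    count (fun t => aA n t (v + j)) (iota (1 + v) P).
  by rewrite count_shift; apply: eq_count => i /=; congr (aA n _ _); lia.
have C2 : count (fun i => aA n (v + i + P) (v + j)) (iota 1 P) =
    count (fun t => aA n t (v + j)) (iota (1 + (v + P)) P).
  by rewrite count_shift; apply: eq_count => i /=; congr (aA n _ _); lia.
have C3 : count (fun i => aA n (v + i - P) (v + j)) (iota 1 P) =
    count (fun t => aA n t (v + j)) (iota (1 + (v - P)) P).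
  by rewrite count_shift; apply: eq_count => i /=; congr (aA n _ _); lia.
rewrite C1 C2 C3.
have [K0 HK0] := @col_full1 n (v + j) (ltac:(lia)).
set lo := 1 + (v - P).
have := HK0 (lo + (P + (P + (P + K0)))) (ltac:(lia)).
rewrite (iotaD 0 lo) add0n (iotaD lo P) (iotaD (lo + P) P) (iotaD (lo + P + P) P) !count_cat.
have -> : lo + P = 1 + v by rewrite /lo; lia.
have -> : 1 + v + P = 1 + (v + P) by lia.
rewrite (Ezero (iota 0 lo)); last first.
  move=> t; rewrite mem_iota /lo /distn; lia.
rewrite (Ezero (iota (1 + (v + P) + P) K0)); last first.
  move=> t; rewrite mem_iota /distn; lia.
lia.
Qed.
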